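(* Let $d\ge 2$ and consider a translation-invariant, nearest-neighbor, frustration free quantum spin chain on $\mathbb{Z}$ with single-site spaces $\mathcal{H}_x=\mathbb{C}^d$, a fixed positive two-site interaction $h(x,x+1)\ge 0$, and local Hamiltonians $H(c,d)=\sum_{x=c}^{d-1}h(x,x+1)$ (notation as in the context). Suppose that $\varepsilon_{m,n}<1/2$ for some integers $n\ge m\ge 1$. Let $N\ge 2$ and $\psi\in\mathcal{G}(1,N)^\perp\subset \mathcal{H}_{[1,N]}$, and define $$\psi_1=(1-G(1,N-n))\psi,\qquad \psi_2=G(1,N-n)\psi,$$ so that $\psi=\psi_1+\psi_2$ (if $N\le n+1$, then $\psi_1=0$ and $\psi_2=\psi$). Then $$\langle\psi, H(1,N)\psi\rangle\ \ge\ \gamma_{m+n}\big(\alpha(\varepsilon_{m,n})\|\psi_1\|^2+\beta(\varepsilon_{m,n})\|\psi_2\|^2\big),$$ where $\alpha(\varepsilon)=(\sqrt{1-\varepsilon}-\sqrt{\varepsilon})^2$ and $\beta(\varepsilon)=\sqrt{1-\varepsilon}\,(\sqrt{1-\varepsilon}-\sqrt{\varepsilon})$.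
   Context: Setting: for each $x\in\mathbb{Z}$, $\mathcal{H}_x=\mathbb{C}^d$, and for a finite $\Lambda\subset\mathbb{Z}$, $\mathcal{H}_\Lambda=\bigotimes_{x\in\Lambda}\mathcal{H}_x$. A fixed positive operator $h$ on $\mathbb{C}^d\otimes\mathbb{C}^d$ gives $h(x,x+1)$ acting on sites $x,x+1$. For integers $c\le d$, $H(c,d)=\sum_{x=c}^{d-1}h(x,x+1)$, viewed as an operator on $\mathcal{H}_\Lambda$ for any interval $\Lambda\supset[c,d]$ (tensored with the identity elsewhere); $H(c,c)=0$. Frustration free means $\mathcal{G}(c,d):=\operatorname{Ker}H(c,d)\ne\{0\}$ for every interval $[c,d]$. $G(c,d)$ denotes the orthogonal projection onto $\mathcal{G}(c,d)$ (so $G(c,c)=1$; and by convention $G(1,k)=1$ for $k\le 1$). For $c<d$, the spectral gap $\gamma(c,d)$ is the largest number with $H(c,d)\ge\gamma(c,d)(1-G(c,d))$; it depends only on $d-c+1$. Set $\gamma_N=\min_{2\le k\le N}\gamma(1,k)$. For $m,n\ge 1$, on any $\mathcal{H}_{[a,b]}$ with $a\le -m$, $b\ge n$, define $$\varepsilon(m,n)=\sup\{\langle\psi,G(0,n)\psi\rangle:\ \psi\in\mathcal{G}(-m,0),\ \psi\in\mathcal{G}(-m,n)^\perp,\ \|\psi\|=1\},$$ (independent of $a,b$ and translation invariant), and $\varepsilon_{m,n}=\sup_{m'\ge m}\varepsilon(m',n)$. *)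

(* Defs.v *)
From HB Require Import structures.
From mathcomp Require Import all_boot all_order all_algebra.
From mathcomp Require Import boolp classical_sets reals.
From mathcomp.real_closed Require Import complex.

Set Implicit Arguments.
Unset Strict Implicit.
Unset Printing Implicit Defensive.

Import Order.TTheory GRing.Theory Num.Theory.
Local Open Scope ring_scope.
Local Open Scope complex_scope.

Section SpinChain.
Variable R : realType.
Local Notation C := (R[i]).
Variable d : nat.

(* Basis configurations of a chain of L sites (sites 0..L-1), each site C^d. *)
Definition conf (L : nat) := {ffun 'I_L -> 'I_d}.

(* Vectors of H_Lambda = (C^d)^{tensor L}, in the product basis. *)
Definition vec (L : nat) := {ffun conf L -> C}.

Definition dot (L : nat) (u v : vec L) : C := \sum_(s : conf L) (u s)^* * v s.

Definition nrm2 (L : nat) (u : vec L) : R := complex.Re (dot u u).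

(* Two-site operator h on C^d (x) C^d, given by its matrix entries h p q. *)
Definition two_site := ('I_d * 'I_d)%type -> ('I_d * 'I_d)%type -> C.

Definition positive_op (h : two_site) : Prop :=
  forall phi : ('I_d * 'I_d)%type -> C,
    0 <= \sum_(p : 'I_d * 'I_d) (phi p)^* * \sum_(q : 'I_d * 'I_d) h p q * phi q.

Definition upd (L : nat) (s : conf L) (j k : 'I_L) (a b : 'I_d) : conf L :=
  [ffun i => if i == j then a else if i == k then b else s i].

(* h(x,x+1) acting on sites x, x+1 of the chain of L sites (tensored with the
   identity elsewhere); it is 0 if x+1 is not a site. *)
Definition hop (h : two_site) (L x : nat) (psi : vec L) : vec L :=
  [ffun s : conf L => \sum_(j : 'I_L | val j == x) \sum_(k : 'I_L | val k == x.+1)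
      \sum_(a : 'I_d) \sum_(b : 'I_d) h (s j, s k) (a, b) * psi (upd s j k a b)].

(* H on the sites [i, j] (0-based) = sum_{x=i}^{j-1} h(x,x+1); empty if j <= i. *)
Definition Hchain (h : two_site) (L i j : nat) (psi : vec L) : vec L :=
  \sum_(i <= x < j) hop h x psi.

Definition kerH (h : two_site) (L i j : nat) : set (vec L) :=
  [set v | Hchain h i j v = 0].
Arguments kerH : clear implicits.

Definition oproj (L : nat) (V : set (vec L)) (x : vec L) : vec L :=
  xget 0 [set y | V y /\ forall v, V v -> dot v (x - y) = 0].

Definition Gproj (h : two_site) (L i j : nat) : vec L -> vec L :=
  oproj (kerH h L i j).
Arguments Gproj : clear implicits.

(* Frustration freeness: Ker H(c,d) <> {0} for every interval; by
   translation invariance it suffices to consider the full chain [0, L-1]. *)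
Definition frustration_free (h : two_site) : Prop :=
  forall L : nat, (0 < L)%N -> exists v : vec L, v != 0 /\ Hchain h 0 L.-1 v = 0.

(* gamma(1,k): the largest g with H(1,k) >= g (1 - G(1,k)) on H_[1,k]
   (sites 0..k-1). *)
Definition gap (h : two_site) (k : nat) : R :=
  sup [set g : R | forall phi : vec k,
         0 <= dot phi (Hchain h 0 k.-1 phi - g%:C *: (phi - Gproj h k 0 k.-1 phi))].

Definition gammaN (h : two_site) (N : nat) : R :=
  \big[Order.min/gap h 2]_(2 <= k < N.+1) gap h k.

(* epsilon(m,n), computed on Lambda = [-m, n]  (sites 0..m+n, original site 0
   is site m). *)
Definition eps (h : two_site) (m n : nat) : R :=
  sup [set e : R | exists psi : vec (m + n).+1,
         [/\ kerH h (m + n).+1 0 m psi,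
             (forall v, kerH h (m + n).+1 0 (m + n) v -> dot v psi = 0),
             dot psi psi = 1 &
             e%:C = dot psi (Gproj h (m + n).+1 m (m + n) psi)]].

Definition eps_sup (h : two_site) (m n : nat) : R :=
  sup [set e : R | exists m', (m <= m')%N /\ e = eps h m' n].

Definition alpha (e : R) : R := (Num.sqrt (1 - e) - Num.sqrt e) ^+ 2.
Definition beta (e : R) : R := Num.sqrt (1 - e) * (Num.sqrt (1 - e) - Num.sqrt e).

End SpinChain.
Arguments kerH {R d} h L i j.
Arguments Gproj {R d} h L i j.

(* Main.v *)
Require Import Defs.
From HB Require Import structures.
From mathcomp Require Import all_boot all_order all_algebra.
From mathcomp Require Import boolp classical_sets reals.
From mathcomp.real_closed Require Import complex.
From mathcomp Require Import ring lra zify.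
Import Order.TTheory GRing.Theory Num.Theory.
Local Open Scope ring_scope.
Local Open Scope complex_scope.

Set Implicit Arguments.
Unset Strict Implicit.
Unset Printing Implicit Defensive.


Section Cplx.
Variable R : realType.
Local Notation C := (R[i]).
Implicit Types x y z : C.

Lemma ReD x y : complex.Re (x + y) = complex.Re x + complex.Re y.
Proof. by case: x; case: y. Qed.
Lemma ImD x y : complex.Im (x + y) = complex.Im x + complex.Im y.
Proof. by case: x; case: y. Qed.
Lemma ReN x : complex.Re (- x) = - complex.Re x.
Proof. by case: x. Qed.
Lemma ImN x : complex.Im (- x) = - complex.Im x.
Proof. by case: x. Qed.
Lemma ReB x y : complex.Re (x - y) = complex.Re x - complex.Re y.
Proof. by rewrite ReD ReN. Qed.
Lemma ImB x y : complex.Im (x - y) = complex.Im x - complex.Im y.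
Proof. by rewrite ImD ImN. Qed.
Lemma ReMc x y : complex.Re (x * y) = complex.Re x * complex.Re y - complex.Im x * complex.Im y.
Proof. by case: x; case: y. Qed.
Lemma ImMc x y : complex.Im (x * y) = complex.Re x * complex.Im y + complex.Im x * complex.Re y.
Proof. by case: x => a b; case: y => c e /=; rewrite addrC. Qed.
Lemma Re0 : complex.Re (0 : C) = 0. Proof. by []. Qed.
Lemma Im0 : complex.Im (0 : C) = 0. Proof. by []. Qed.
Lemma ReC (a : R) : complex.Re (a%:C) = a. Proof. by []. Qed.
Lemma ImC (a : R) : complex.Im (a%:C) = 0. Proof. by []. Qed.
Lemma ReJ x : complex.Re (Num.conj x) = complex.Re x. Proof. by case: x. Qed.
Lemma ImJ x : complex.Im (Num.conj x) = - complex.Im x. Proof. by case: x. Qed.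
Lemma Re_sum (I : Type) (r : seq I) (P : pred I) (F : I -> C) :
  complex.Re (\sum_(i <- r | P i) F i) = \sum_(i <- r | P i) complex.Re (F i).
Proof. by elim/big_rec2: _ => // i a b _ <-; rewrite ReD. Qed.
Lemma Im_sum (I : Type) (r : seq I) (P : pred I) (F : I -> C) :
  complex.Im (\sum_(i <- r | P i) F i) = \sum_(i <- r | P i) complex.Im (F i).
Proof. by elim/big_rec2: _ => // i a b _ <-; rewrite ImD. Qed.
Lemma conj_sum (I : Type) (r : seq I) (P : pred I) (F : I -> C) :
  Num.conj (\sum_(i <- r | P i) F i) = \sum_(i <- r | P i) Num.conj (F i).
Proof. exact: rmorph_sum. Qed.
Lemma conjM x y : Num.conj (x * y) = Num.conj x * Num.conj y. Proof. exact: rmorphM. Qed.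
Lemma conjD x y : Num.conj (x + y) = Num.conj x + Num.conj y. Proof. exact: rmorphD. Qed.
Lemma conjN x : Num.conj (- x) = - Num.conj x. Proof. exact: rmorphN. Qed.
Lemma conjK x : Num.conj (Num.conj x) = x. Proof. exact: conjCK. Qed.
Lemma c_eq x y : complex.Re x = complex.Re y -> complex.Im x = complex.Im y -> x = y.
Proof. by case: x; case: y => a b c e /= -> ->. Qed.
Lemma conjCr (k : R) : Num.conj (k%:C) = k%:C.
Proof. by apply: c_eq; rewrite ?ReJ ?ImJ /= ?oppr0. Qed.
Lemma Cre x : complex.Im x = 0 -> x = (complex.Re x)%:C.
Proof. by case: x => a b /= ->. Qed.
Lemma c_mulJ x : Num.conj x * x = (complex.Re x ^+ 2 + complex.Im x ^+ 2)%:C.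
Proof. apply: c_eq; rewrite ?ReMc ?ImMc ReJ ImJ /=; ring. Qed.
Lemma le0c x : (0 <= x) = (complex.Im x == 0) && (0 <= complex.Re x).
Proof. by rewrite lecE. Qed.
End Cplx.

Section Inner.
Variables (R : realType) (d L : nat).
Local Notation C := (R[i]).
Local Notation V := (vec R d L).
Implicit Types (u v w : V) (a : C).

Lemma vecD u v s : (u + v) s = u s + v s. Proof. by rewrite ffunE. Qed.
Lemma vecN u s : (- u) s = - u s. Proof. by rewrite ffunE. Qed.
Lemma vecB u v s : (u - v) s = u s - v s. Proof. by rewrite !ffunE. Qed.
Lemma vecZ a u s : (a *: u) s = a * u s. Proof. by rewrite ffunE. Qed.
Lemma vec0 s : (0 : V) s = 0. Proof. by rewrite ffunE. Qed.
Lemma vec_sum (I : Type) (r : seq I) (P : pred I) (F : I -> V) s :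
  (\sum_(i <- r | P i) F i) s = \sum_(i <- r | P i) F i s.
Proof. by rewrite sum_ffunE. Qed.

Lemma dotDr u v w : dot u (v + w) = dot u v + dot u w.
Proof. rewrite /dot -big_split; apply: eq_bigr => s _; by rewrite vecD mulrDr. Qed.
Lemma dotDl u v w : dot (v + w) u = dot v u + dot w u.
Proof. rewrite /dot -big_split; apply: eq_bigr => s _; by rewrite vecD conjD mulrDl. Qed.
Lemma dotZr a u v : dot u (a *: v) = a * dot u v.
Proof. rewrite /dot mulr_sumr; apply: eq_bigr => s _; by rewrite vecZ mulrCA. Qed.
Lemma dotZl a u v : dot (a *: u) v = Num.conj a * dot u v.
Proof. rewrite /dot mulr_sumr; apply: eq_bigr => s _; by rewrite vecZ conjM mulrA. Qed.
Lemma dotNr u v : dot u (- v) = - dot u v.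
Proof. rewrite /dot -sumrN; apply: eq_bigr => s _; by rewrite vecN mulrN. Qed.
Lemma dotNl u v : dot (- u) v = - dot u v.
Proof. rewrite /dot -sumrN; apply: eq_bigr => s _; by rewrite vecN conjN mulNr. Qed.
Lemma dotBr u v w : dot u (v - w) = dot u v - dot u w.
Proof. by rewrite dotDr dotNr. Qed.
Lemma dotBl u v w : dot (v - w) u = dot v u - dot w u.
Proof. by rewrite dotDl dotNl. Qed.
Lemma dot0r u : dot u 0 = 0.
Proof. by rewrite /dot big1 // => s _; rewrite vec0 mulr0. Qed.
Lemma dot0l u : dot 0 u = 0.
Proof. by rewrite /dot big1 // => s _; rewrite vec0 (rmorph0 Num.conj) mul0r. Qed.
Lemma dot_sumr (I : Type) (r : seq I) (P : pred I) (F : I -> V) u :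
  dot u (\sum_(i <- r | P i) F i) = \sum_(i <- r | P i) dot u (F i).
Proof.
elim/big_rec2: _ => [|i a b _ <-]; first exact: dot0r.
by rewrite dotDr.
Qed.
Lemma dotC u v : dot v u = Num.conj (dot u v).
Proof.
rewrite /dot conj_sum; apply: eq_bigr => s _; by rewrite conjM conjK mulrC.
Qed.

Lemma dot_self u : dot u u = (nrm2 u)%:C.
Proof.
rewrite /nrm2; apply: Cre.
rewrite /dot Im_sum big1 // => s _; by rewrite c_mulJ.
Qed.
Lemma nrm2E u : nrm2 u = \sum_s (complex.Re (u s) ^+ 2 + complex.Im (u s) ^+ 2).
Proof. by rewrite /nrm2 /dot Re_sum; apply: eq_bigr => s _; rewrite c_mulJ. Qed.
Lemma nrm2_ge0 u : 0 <= nrm2 u.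
Proof. rewrite nrm2E; apply: sumr_ge0 => s _; apply: addr_ge0; exact: sqr_ge0. Qed.
Lemma nrm2_eq0 u : nrm2 u = 0 -> u = 0.
Proof.
rewrite nrm2E => /eqP; rewrite psumr_eq0 => [/allP H|s _]; last first.
  by apply: addr_ge0; exact: sqr_ge0.
apply/ffunP => s; rewrite vec0.
have /H : s \in index_enum (conf d L) by rewrite mem_index_enum.
rewrite implyTb paddr_eq0 ?sqr_ge0 // !sqrf_eq0 => /andP [/eqP H1 /eqP H2].
by apply: c_eq.
Qed.

Definition rdot u v := complex.Re (dot u v).
Lemma rdotC u v : rdot u v = rdot v u.
Proof. by rewrite /rdot dotC ReJ. Qed.
Lemma nrm2D u v : nrm2 (u + v) = nrm2 u + nrm2 v + 2 * rdot u v.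
Proof.
rewrite /nrm2 dotDl !dotDr !ReD /rdot (dotC u v) ReJ; ring.
Qed.
Lemma nrm2B u v : nrm2 (u - v) = nrm2 u + nrm2 v - 2 * rdot u v.
Proof.
rewrite /nrm2 dotBl !dotBr !ReB /rdot (dotC u v) ReJ; ring.
Qed.
Lemma nrm2N u : nrm2 (- u) = nrm2 u.
Proof. by rewrite /nrm2 dotNl dotNr opprK. Qed.
Lemma nrm2Z (k : R) u : nrm2 (k%:C *: u) = k ^+ 2 * nrm2 u.
Proof.
rewrite /nrm2 dotZl dotZr conjCr mulrA ReMc /= !mul0r !mulr0 !subr0 !addr0.
by rewrite mul0r subr0 expr2.
Qed.

Lemma CS u v : rdot u v ^+ 2 <= nrm2 u * nrm2 v.
Proof.
have [v0|vn0] := eqVneq (nrm2 v) 0.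
  by move/nrm2_eq0: v0 => ->; rewrite /rdot /nrm2 !dot0r /= expr0n mulr0.
have vp : 0 < nrm2 v by rewrite lt_def vn0 nrm2_ge0.
pose k := rdot u v / nrm2 v.
have := nrm2_ge0 (u - k%:C *: v).
rewrite nrm2B nrm2Z /rdot dotZr ReMc /= mul0r subr0 -/(rdot u v).
rewrite -(ler_pM2r vp) mul0r => H.
have E : (nrm2 u + k ^+ 2 * nrm2 v - 2 * (k * rdot u v)) * nrm2 v
   = nrm2 u * nrm2 v - rdot u v ^+ 2.
  rewrite /k; field; exact: vn0.
by rewrite -subr_ge0 -E.
Qed.
End Inner.


Section Proj.
Variables (R : realType) (d L : nat).
Local Notation C := (R[i]).
Local Notation V := (vec R d L).
Implicit Types (u v w x y : V) (a : C).

Lemma subBB (x y z : V) : (x - y) - (x - z) = z - y.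
Proof. by rewrite opprB addrC addrA subrK. Qed.

Definition lin (A : V -> V) := forall a u v, A (a *: u + v) = a *: A u + A v.

Section Lin.
Variables (A : V -> V) (hA : lin A).
Lemma lin0 : A 0 = 0.
Proof.
have H := hA 1 0 0; rewrite !scale1r addr0 in H.
by have := congr1 (fun z => z - A 0) H; rewrite addrK subrr => <-.
Qed.
Lemma linD u v : A (u + v) = A u + A v.
Proof. by have := hA 1 u v; rewrite !scale1r. Qed.
Lemma linZ a u : A (a *: u) = a *: A u.
Proof. by have := hA a u 0; rewrite !addr0 lin0 addr0. Qed.
Lemma linN u : A (- u) = - A u.
Proof. by rewrite -scaleN1r linZ scaleN1r. Qed.
Lemma linB u v : A (u - v) = A u - A v.
Proof. by rewrite linD linN. Qed.
Lemma lin_sum (I : Type) (r : seq I) (P : pred I) (F : I -> V) :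
  A (\sum_(i <- r | P i) F i) = \sum_(i <- r | P i) A (F i).
Proof. elim/big_rec2: _ => [|i b c _ <-]; [exact: lin0 | exact: linD]. Qed.
End Lin.

Definition ev (t : conf d L) : V := [ffun s => (s == t)%:R].
Lemma vec_expand v : v = \sum_t v t *: ev t.
Proof.
apply/ffunP => s; rewrite vec_sum (bigD1 s) //= vecZ ffunE eqxx mulr1 big1 ?addr0 //.
by move=> t /negbTE; rewrite vecZ ffunE eq_sym => ->; rewrite mulr0.
Qed.
Lemma lin_expand A v : lin A -> A v = \sum_t v t *: A (ev t).
Proof.
move=> hA; rewrite {1}(vec_expand v) (lin_sum hA).
by apply: eq_bigr => t _; rewrite (linZ hA).
Qed.

Definition adj (A : V -> V) (t : conf d L) : V := [ffun t' => Num.conj (A (ev t') t)].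
Lemma dot_adj A v t : lin A -> dot (adj A t) v = A v t.
Proof.
move=> hA; rewrite (lin_expand v hA) vec_sum /dot.
by apply: eq_bigr => t' _; rewrite ffunE conjK vecZ mulrC.
Qed.

Lemma dot_orth_sym u v : dot u v = 0 -> dot v u = 0.
Proof. by move=> H; rewrite dotC H (rmorph0 Num.conj). Qed.

Lemma GS (S : seq V) : forall x, exists y,
  (forall s, s \in S -> dot s (x - y) = 0) /\
  (forall v, (forall s, s \in S -> dot v s = 0) -> dot v y = 0).
Proof.
elim: S => [|w S IH] x.
  by exists 0; split => // v _; rewrite dot0r.
have [yx [Hx1 Hx2]] := IH x.
have [yw [Hw1 Hw2]] := IH w.
have Hywx : dot yw (x - yx) = 0.
  apply: dot_orth_sym; apply: Hw2 => s sS; apply: dot_orth_sym; exact: Hx1.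
have Hw'S : forall s, s \in S -> dot (w - yw) s = 0.
  by move=> s sS; apply: dot_orth_sym; apply: Hw1.
have [w0|wn0] := eqVneq (nrm2 (w - yw)) 0.
  have ew : w = yw by apply/eqP; rewrite -subr_eq0; apply/eqP/nrm2_eq0.
  exists yx; split.
    move=> s; rewrite inE => /orP [/eqP ->|sS]; last exact: Hx1.
    by rewrite ew.
  by move=> v Hv; apply: Hx2 => s sS; apply: Hv; rewrite inE sS orbT.
pose c := dot (w - yw) x / (nrm2 (w - yw))%:C.
exists (yx + c *: (w - yw)); split.
  move=> s; rewrite inE => /orP [/eqP ->|sS].
    rewrite opprD addrA dotBr dotZr.
    have Ew : forall z, dot w z = dot (w - yw) z + dot yw z.
      by move=> z; rewrite -dotDl subrK.
    have -> : dot w (w - yw) = (nrm2 (w - yw))%:C.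
      by rewrite Ew (dot_orth_sym (Hw2 _ Hw'S)) addr0 dot_self.
    have -> : dot w (x - yx) = dot (w - yw) x.
      by rewrite Ew Hywx addr0 dotBr (Hx2 _ Hw'S) subr0.
    rewrite /c mulfVK ?subrr //.
    by apply: contra wn0 => /eqP [->].
  by rewrite opprD addrA dotBr Hx1 // dotZr Hw1 // mulr0 subrr.
move=> v Hv; rewrite dotDr dotZr Hx2; last first.
  by move=> s sS; apply: Hv; rewrite inE sS orbT.
rewrite dotBr Hw2; last by move=> s sS; apply: Hv; rewrite inE sS orbT.
by rewrite Hv ?inE ?eqxx // subrr mulr0 addr0.
Qed.

Section KerProj.
Variables (A : V -> V) (hA : lin A).
Local Notation W := (@mkset V (fun v => A v = 0)).
Local Notation P := (oproj W).

Lemma proj_ex x : exists y, W y /\ forall v, W v -> dot v (x - y) = 0.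
Proof.
have [y [H1 H2]] := GS [seq adj A t | t <- enum (conf d L)] x.
exists (x - y); split.
  apply/ffunP => t; rewrite vec0 -(dot_adj _ t hA); apply: H1.
  by apply/mapP; exists t; rewrite ?mem_enum.
move=> v /= Hv; rewrite opprB addrC subrK; apply: H2 => s /mapP [t _ ->].
by apply: dot_orth_sym; rewrite dot_adj // Hv vec0.
Qed.

Lemma proj_spec x : W (P x) /\ forall v, W v -> dot v (x - P x) = 0.
Proof. rewrite /oproj; exact: (xgetPex 0 (proj_ex x)). Qed.
Lemma proj_in x : A (P x) = 0. Proof. by case: (proj_spec x). Qed.
Lemma proj_orth x v : A v = 0 -> dot v (x - P x) = 0.
Proof. by case: (proj_spec x) => _; apply. Qed.
Lemma Wsub u v : A u = 0 -> A v = 0 -> A (u - v) = 0.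
Proof. by move=> hu hv; rewrite (linB hA) hu hv subrr. Qed.
Lemma proj_uniq x y : A y = 0 -> (forall v, A v = 0 -> dot v (x - y) = 0) -> P x = y.
Proof.
move=> Ay Hy; apply/eqP; rewrite -subr_eq0; apply/eqP/nrm2_eq0.
have Hd : A (P x - y) = 0 by apply: Wsub => //; exact: proj_in.
by rewrite /nrm2 -{2}(subBB x y (P x)) dotBr (Hy _ Hd) (proj_orth _ Hd) subrr.
Qed.
Lemma proj_id x : A x = 0 -> P x = x.
Proof. by move=> Ax; apply: proj_uniq => // v _; rewrite subrr dot0r. Qed.
Lemma proj_zero x : (forall v, A v = 0 -> dot v x = 0) -> P x = 0.
Proof. by move=> H; apply: proj_uniq; [exact: lin0|move=> v Av; rewrite subr0; apply: H]. Qed.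
Lemma proj_lin : lin P.
Proof.
move=> a u v; apply: proj_uniq.
  by rewrite (hA _ (P u)) !proj_in scaler0 addr0.
move=> w Aw.
have -> : a *: u + v - (a *: P u + P v) = a *: (u - P u) + (v - P v).
  by rewrite scalerBr opprD !addrA; congr (_ + _); rewrite addrAC.
by rewrite dotDr dotZr !proj_orth // mulr0 addr0.
Qed.
Lemma proj_dotl x v : A v = 0 -> dot v (P x) = dot v x.
Proof. by move=> Av; apply/eqP; rewrite eq_sym -subr_eq0 -dotBr proj_orth. Qed.
Lemma proj_dotr x v : A v = 0 -> dot (P x) v = dot x v.
Proof. by move=> Av; rewrite dotC (proj_dotl _ Av) -dotC. Qed.
Lemma proj_sa x y : dot (P x) y = dot x (P y).
Proof. by rewrite -(proj_dotl y (proj_in x)) (proj_dotr x (proj_in y)). Qed.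
Lemma proj_self x : dot x (P x) = (nrm2 (P x))%:C.
Proof. by rewrite -dot_self (proj_dotr _ (proj_in x)). Qed.
Lemma proj_pyth x : nrm2 x = nrm2 (P x) + nrm2 (x - P x).
Proof.
have := nrm2D (P x) (x - P x); rewrite [P x + _]addrC subrK => ->.
by rewrite /rdot (proj_orth _ (proj_in x)) Re0 mulr0 addr0.
Qed.
Lemma proj_le x : nrm2 (P x) <= nrm2 x.
Proof. by rewrite [leRHS]proj_pyth lerDl nrm2_ge0. Qed.
Lemma proj_idem x : P (P x) = P x.
Proof. exact/proj_id/proj_in. Qed.
End KerProj.

Section Nested.
Variables (A1 A2 : V -> V) (h1 : lin A1) (h2 : lin A2).
Hypothesis sub : forall v, A1 v = 0 -> A2 v = 0.
Local Notation P1 := (oproj (@mkset V (fun v => A1 v = 0))).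
Local Notation P2 := (oproj (@mkset V (fun v => A2 v = 0))).
Lemma proj_nest21 x : P2 (P1 x) = P1 x.
Proof. apply: proj_id => //; apply: sub; exact: proj_in. Qed.
Lemma proj_nest12 x : P1 (P2 x) = P1 x.
Proof.
apply: proj_uniq => //; first exact: proj_in.
move=> v Av.
rewrite -(subBB x).
by rewrite dotBr !proj_orth // ?subrr //; apply: sub.
Qed.
End Nested.
End Proj.


Section Chain.
Variables (R : realType) (d : nat) (h : two_site R d).
Local Notation C := (R[i]).

Lemma hop_lin L x : lin (@hop R d h L x).
Proof.
move=> a u v; apply/ffunP => s; rewrite !ffunE.
do 4 (rewrite scaler_sumr -big_split; apply: eq_bigr => ? _).
rewrite vecD vecZ mulrDr; congr (_ + _); rewrite mulrCA //.
Qed.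

Lemma Hchain_lin L i j : lin (@Hchain R d h L i j).
Proof.
move=> a u v; rewrite /Hchain scaler_sumr -big_split.
by apply: eq_bigr => x _; rewrite hop_lin.
Qed.


Section GL.
Variables (L i j : nat).
Local Notation A := (@Hchain R d h L i j).
Local Notation G := (Gproj h L i j).
Local Notation hl := (@Hchain_lin L i j).
Lemma G_in x : A (G x) = 0. Proof. exact: (proj_in hl). Qed.
Lemma G_orth x v : A v = 0 -> dot v (x - G x) = 0. Proof. exact: (proj_orth hl). Qed.
Lemma G_uniq x y : A y = 0 -> (forall v, A v = 0 -> dot v (x - y) = 0) -> G x = y.
Proof. exact: (proj_uniq hl). Qed.
Lemma G_id x : A x = 0 -> G x = x. Proof. exact: (proj_id hl). Qed.
Lemma G_zero x : (forall v, A v = 0 -> dot v x = 0) -> G x = 0. Proof. exact: (proj_zero hl). Qed.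
Lemma G_lin : lin G. Proof. exact: (proj_lin hl). Qed.
Lemma G_dotl x v : A v = 0 -> dot v (G x) = dot v x. Proof. exact: (proj_dotl hl). Qed.
Lemma G_dotr x v : A v = 0 -> dot (G x) v = dot x v. Proof. exact: (proj_dotr hl). Qed.
Lemma G_sa x y : dot (G x) y = dot x (G y). Proof. exact: (proj_sa hl). Qed.
Lemma G_self x : dot x (G x) = (nrm2 (G x))%:C. Proof. exact: (proj_self hl). Qed.
Lemma G_pyth x : nrm2 x = nrm2 (G x) + nrm2 (x - G x). Proof. exact: (proj_pyth hl). Qed.
Lemma G_le x : nrm2 (G x) <= nrm2 x. Proof. exact: (proj_le hl). Qed.
Lemma G_idem x : G (G x) = G x. Proof. exact: (proj_idem hl). Qed.
End GL.
Lemma G_nest21 L i j i' j' x :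
  (forall v, @Hchain R d h L i j v = 0 -> Hchain h i' j' v = 0) ->
  Gproj h L i' j' (Gproj h L i j x) = Gproj h L i j x.
Proof. move=> H; rewrite /Gproj /kerH; exact: (proj_nest21 (@Hchain_lin L i j) (@Hchain_lin L i' j') H). Qed.
Lemma G_nest12 L i j i' j' x :
  (forall v, @Hchain R d h L i j v = 0 -> Hchain h i' j' v = 0) ->
  Gproj h L i j (Gproj h L i' j' x) = Gproj h L i j x.
Proof. move=> H; rewrite /Gproj /kerH; exact: (proj_nest12 (@Hchain_lin L i j) (@Hchain_lin L i' j') H). Qed.

Lemma big_ord_eq (n x : nat) (H : (x < n)%N) (F : 'I_n -> C) :
  \sum_(j : 'I_n | val j == x) F j = F (Ordinal H).
Proof. by apply: big_pred1 => j /=; rewrite -val_eqE. Qed.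

Section Window.
Variables (L c k' : nat) (hck : (c + k'.+1 <= L)%N) (a0 : 'I_d).
Local Notation k := k'.+1.
Local Notation VL := (vec R d L).
Local Notation Vk := (vec R d k).

Definition inw (i : nat) := (c <= i < c + k)%N.
Definition wglue (s : conf d k) (r : conf d L) : conf d L :=
  [ffun i : 'I_L => if inw i then s (inord (i - c)%N) else r i].
Definition wreset (t : conf d L) : conf d L := [ffun i : 'I_L => if inw i then a0 else t i].
Lemma wlt (j : 'I_k) : (c + j < L)%N.
Proof. by have := ltn_ord j; lia. Qed.
Definition wproj (t : conf d L) : conf d k := [ffun j => t (Ordinal (wlt j))].
Definition fib (u : VL) (r : conf d L) : Vk := [ffun s => u (wglue s r)].

Lemma inw_inord (i : nat) : inw i -> ((inord (i - c)%N : 'I_k) = (i - c)%N :> nat).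
Proof. by rewrite /inw => H; rewrite inordK //; lia. Qed.

Lemma wproj_glue s r : wproj (wglue s r) = s.
Proof.
apply/ffunP => j; rewrite !ffunE /=.
have -> : inw (c + j) by rewrite /inw; have := ltn_ord j; lia.
by congr (s _); apply: val_inj; move: (ltn_ord j) => hj; rewrite /= inordK; lia.
Qed.
Lemma wreset_glue s r : wreset (wglue s r) = wreset r.
Proof. by apply/ffunP => i; rewrite !ffunE; case: (inw i). Qed.
Lemma wglue_proj t : wglue (wproj t) (wreset t) = t.
Proof.
apply/ffunP => i; rewrite !ffunE; case: (boolP (inw i)) => Hi //.
congr (t _); apply: val_inj => /=; rewrite inw_inord //; move: Hi; rewrite /inw; lia.
Qed.
Lemma wreset_reset t : wreset (wreset t) = wreset t.
Proof. by apply/ffunP => i; rewrite !ffunE; case: (inw i). Qed.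

Lemma sum_fib (F : conf d L -> C) :
  \sum_t F t = \sum_(r | wreset r == r) \sum_s F (wglue s r).
Proof.
rewrite (partition_big wreset (fun r => wreset r == r)) /=; last first.
  by move=> t _; rewrite wreset_reset.
apply: eq_bigr => r /eqP Hr.
rewrite (reindex_onto (fun s => wglue s r) wproj) /=; last first.
  by move=> t /eqP <-; rewrite wglue_proj.
by apply: eq_bigl => s; rewrite wreset_glue Hr eqxx wproj_glue eqxx.
Qed.

Lemma dot_fib (u v : VL) : dot u v = \sum_(r | wreset r == r) dot (fib u r) (fib v r).
Proof.
rewrite /dot sum_fib; apply: eq_bigr => r _; apply: eq_bigr => s _; by rewrite !ffunE.
Qed.

Lemma fibD u v r : fib (u + v) r = fib u r + fib v r.
Proof. by apply/ffunP => s; rewrite !ffunE. Qed.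
Lemma fibB u v r : fib (u - v) r = fib u r - fib v r.
Proof. by apply/ffunP => s; rewrite !ffunE. Qed.
Lemma fibZ a u r : fib (a *: u) r = a *: fib u r.
Proof. by apply/ffunP => s; rewrite !ffunE. Qed.
Lemma fib0 r : fib 0 r = 0.
Proof. by apply/ffunP => s; rewrite !ffunE. Qed.
Lemma fib_sum (I : Type) (rs : seq I) (P : pred I) (F : I -> VL) r :
  fib (\sum_(i <- rs | P i) F i) r = \sum_(i <- rs | P i) fib (F i) r.
Proof. by apply/ffunP => s; rewrite !ffunE !sum_ffunE; apply: eq_bigr => i _; rewrite ffunE. Qed.

Lemma fib_eq (u v : VL) : (forall r, wreset r == r -> fib u r = fib v r) -> u = v.
Proof.
move=> H; apply/ffunP => t; rewrite -(wglue_proj t).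
have := H (wreset t); rewrite wreset_reset eqxx => /(_ isT) /ffunP /(_ (wproj t)).
by rewrite !ffunE.
Qed.

Lemma upd_glue s r (jx jx1 : 'I_L) (jy jy1 : 'I_k) a b :
  (jy : nat) = (jx - c)%N -> (jy1 : nat) = (jx1 - c)%N -> inw jx -> inw jx1 ->
  upd (wglue s r) jx jx1 a b = wglue (upd s jy jy1 a b) r.
Proof.
move=> e1 e2 i1 i2; apply/ffunP => i; rewrite !ffunE.
case: (boolP (inw i)) => Hi.
  idtac.
  have E1 : (inord (i - c)%N == jy) = (i == jx).
    rewrite -(inj_eq (@ord_inj _)) inw_inord // e1.
    move: Hi i1; rewrite /inw => Hi i1; apply/idP/idP => /eqP H; apply/eqP;
      [apply: ord_inj; lia | by rewrite H].
  have E2 : (inord (i - c)%N == jy1) = (i == jx1).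
    rewrite -(inj_eq (@ord_inj _)) inw_inord // e2.
    move: Hi i2; rewrite /inw => Hi i2; apply/idP/idP => /eqP H; apply/eqP;
      [apply: ord_inj; lia | by rewrite H].
  by rewrite E1 E2.
have -> : (i == jx) = false by apply/negP => /eqP E; move: Hi; rewrite E i1.
by have -> : (i == jx1) = false by apply/negP => /eqP E; move: Hi; rewrite E i2.
Qed.

Lemma fib_hop x u r : (c <= x)%N -> (x.+1 < c + k)%N ->
  fib (hop h x u) r = hop h (x - c) (fib u r).
Proof.
move=> H1 H2; apply/ffunP => s; rewrite !ffunE.
have l1 : (x < L)%N by lia.
have l2 : (x.+1 < L)%N by lia.
have l3 : (x - c < k)%N by lia.
have l4 : ((x - c).+1 < k)%N by lia.
rewrite (big_ord_eq l1) (big_ord_eq l2) (big_ord_eq l3) (big_ord_eq l4).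
have i1 : inw (Ordinal l1) by rewrite /inw /=; lia.
have i2 : inw (Ordinal l2) by rewrite /inw /=; lia.
have Es1 : wglue s r (Ordinal l1) = s (Ordinal l3).
  rewrite ffunE i1; congr (s _); apply: val_inj; rewrite /= inw_inord //.
have Es2 : wglue s r (Ordinal l2) = s (Ordinal l4).
  rewrite ffunE i2; congr (s _); apply: val_inj; rewrite /= inw_inord //; lia.
rewrite Es1 Es2; apply: eq_bigr => a _; apply: eq_bigr => b _.
rewrite ffunE (@upd_glue s r (Ordinal l1) (Ordinal l2) (Ordinal l3) (Ordinal l4)) //=.
lia.
Qed.

Lemma fib_H i j u r : (i <= j)%N -> (j < k)%N ->
  fib (Hchain h (c + i) (c + j) u) r = Hchain h i j (fib u r).
Proof.
move=> Hij Hjk; rewrite /Hchain fib_sum.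
rewrite (addnC c i) (addnC c j) big_addn addnK.
apply: eq_big_nat => y /andP [y1 y2].
rewrite fib_hop; [|lia|lia]. by congr (hop h _ _); lia.
Qed.

Lemma ker_fib i j v : (i <= j)%N -> (j < k)%N ->
  (forall r, wreset r == r -> Hchain h i j (fib v r) = 0) ->
  Hchain h (c + i) (c + j) v = 0.
Proof.
move=> Hij Hjk H; apply: fib_eq => r Hr; rewrite fib_H // H // fib0 //.
Qed.

Lemma fib_G i j u r : (i <= j)%N -> (j < k)%N -> wreset r == r ->
  fib (Gproj h L (c + i) (c + j) u) r = Gproj h k i j (fib u r).
Proof.
move=> Hij Hjk Hr.
pose y : VL := [ffun t => Gproj h k i j (fib u (wreset t)) (wproj t)].
have fy : forall r', wreset r' == r' -> fib y r' = Gproj h k i j (fib u r').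
  move=> r' /eqP Hr'; apply/ffunP => s; rewrite !ffunE wreset_glue Hr' wproj_glue //.
suff -> : Gproj h L (c + i) (c + j) u = y by rewrite fy.
apply: G_uniq.
  apply: ker_fib => // r' Hr'; rewrite fy //.
  exact: G_in.
move=> v Hv; rewrite dot_fib big1 // => r' Hr'.
rewrite fibB fy //; apply: G_orth.
by rewrite -fib_H // Hv fib0.
Qed.

Definition lift (v : Vk) (r0 : conf d L) : VL :=
  [ffun t => if wreset t == r0 then v (wproj t) else 0].
Lemma fib_lift v r0 r : wreset r == r ->
  fib (lift v r0) r = if r == r0 then v else 0.
Proof.
move=> /eqP Hr; apply/ffunP => s; rewrite !ffunE wreset_glue Hr wproj_glue.
by case: eqP => _ //; rewrite ffunE.
Qed.
Lemma dot_lift v r0 u : wreset r0 == r0 -> dot (lift v r0) u = dot v (fib u r0).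
Proof.
move=> H0; rewrite dot_fib (bigD1 r0) //= fib_lift // eqxx big1 ?addr0 //.
by move=> r /andP [Hr /negbTE ne]; rewrite fib_lift // ne dot0l.
Qed.

End Window.
End Chain.


Section Pos.
Variables (R : realType) (d : nat) (h : two_site R d) (hp : positive_op h) (a0 : 'I_d).
Local Notation C := (R[i]).

Definition mk2 (a b : 'I_d) : conf d 2 := [ffun i : 'I_2 => if i == ord0 then a else b].

Lemma pos2 (phi : vec R d 2) : 0 <= dot phi (hop h 0 phi).
Proof.
have l0 : (0 < 2)%N by [].
have l1 : (1 < 2)%N by [].
pose Phi := fun p : 'I_d * 'I_d => phi (mk2 p.1 p.2).
have E : dot phi (hop h 0 phi) =
  \sum_(p : 'I_d * 'I_d) Num.conj (Phi p) * \sum_(a' < d) \sum_(b' < d) h p (a', b') * Phi (a', b').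
  rewrite /dot (reindex (fun p : 'I_d * 'I_d => mk2 p.1 p.2)) /=; last first.
    exists (fun s : conf d 2 => (s ord0, s ord_max)) => [[a b] _|s _] /=.
      by rewrite !ffunE /=.
    apply/ffunP => i; rewrite !ffunE; case: ifP => [/eqP ->//|].
    by case: i => [[|[|n]] Hn] //= _; congr (s _); apply: val_inj.
  apply: eq_bigr => [[a b]] _; rewrite ffunE (big_ord_eq l0) (big_ord_eq l1).
  have -> : mk2 a b (Ordinal l0) = a by rewrite ffunE.
  have -> : mk2 a b (Ordinal l1) = b by rewrite ffunE.
  congr (_ * _); apply: eq_bigr => a' _; apply: eq_bigr => b' _; congr (_ * phi _).
  apply/ffunP => i; rewrite !ffunE.
  by case: i => [[|[|n]] Hn] //=.
have E2 : forall p, \sum_(a' < d) \sum_(b' < d) h p (a', b') * Phi (a', b') = \sum_q h p q * Phi q.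
  by move=> p; rewrite pair_big /=; apply: eq_bigr => [[]].
have -> : dot phi (hop h 0 phi) = \sum_(p : 'I_d * 'I_d) Num.conj (Phi p) * \sum_q h p q * Phi q.
  by rewrite E; apply: eq_bigr => p _; rewrite E2.
exact: hp.
Qed.

Lemma hop_out L x (phi : vec R d L) : (L <= x.+1)%N -> hop h x phi = 0.
Proof.
move=> H; apply/ffunP => s; rewrite !ffunE big1 // => j _.
rewrite big_pred0 // => k; apply/negbTE/eqP => E.
have Hk : (val k < L)%N by exact: ltn_ord.
rewrite E in Hk; lia.
Qed.

Lemma pos_hop L x (phi : vec R d L) : 0 <= dot phi (hop h x phi).
Proof.
have [Hx|Hx] := ltnP x.+1 L; last by rewrite hop_out // dot0r.
have hck : (x + 1%N.+1 <= L)%N by lia.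
rewrite (dot_fib hck a0); apply: sumr_ge0 => r _.
rewrite (fib_hop _ hck) // ?subnn; last by lia.
exact: pos2.
Qed.

Lemma pos_H L i j (phi : vec R d L) : 0 <= dot phi (Hchain h i j phi).
Proof. rewrite /Hchain dot_sumr; apply: sumr_ge0 => x _; exact: pos_hop. Qed.

Lemma ImH L i j (phi : vec R d L) : complex.Im (dot phi (Hchain h i j phi)) = 0.
Proof. by have := pos_H i j phi; rewrite le0c => /andP [/eqP]. Qed.
Lemma ReH L i j (phi : vec R d L) : 0 <= complex.Re (dot phi (Hchain h i j phi)).
Proof. by have := pos_H i j phi; rewrite le0c => /andP []. Qed.

Section Herm.
Variables (L : nat) (A : vec R d L -> vec R d L) (hA : lin A).
Hypothesis Apos : forall phi, complex.Im (dot phi (A phi)) = 0.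

Lemma herm x y : dot x (A y) = Num.conj (dot y (A x)).
Proof.
have E1 : forall u v, dot (u + v) (A (u + v)) =
   dot u (A u) + dot v (A v) + (dot u (A v) + dot v (A u)).
  move=> u v; rewrite (linD hA) !dotDl !dotDr; ring.
have H1 := Apos (x + y); rewrite E1 !ImD !Apos !add0r in H1.
have H2 := Apos (x + 'i%C *: y); rewrite E1 (linZ hA) dotZl dotZr dotZl dotZr in H2.
rewrite !ImD !Apos in H2.
move: H1 H2; rewrite !ImMc /= ?ImD ?ReD ?ImMc ?ReMc /= !Apos.
set a := dot x (A y); set b := dot y (A x).
move=> H1 H2.
apply: c_eq; rewrite ?ReJ ?ImJ; lra.
Qed.

Hypothesis Apos' : forall phi, 0 <= complex.Re (dot phi (A phi)).
Lemma pos_ker v : dot v (A v) = 0 -> A v = 0.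
Proof.
move=> Hv; set w := A v in Hv *.
have key : forall k : R, complex.Re (dot (w - k%:C *: v) (A (w - k%:C *: v))) =
    complex.Re (dot w (A w)) - 2 * k * nrm2 w.
  move=> k; rewrite (linB hA) (linZ hA) -/w !dotBl !dotBr !dotZl !dotZr Hv.
  rewrite (herm v w) -/w dot_self !conjCr.
  rewrite !ReB !ReMc /= ; ring.
apply: nrm2_eq0; apply/eqP; apply: contraT => ne.
have np : 0 < nrm2 w by rewrite lt_def ne nrm2_ge0.
have := Apos' (w - ((complex.Re (dot w (A w)) + 1) / (2 * nrm2 w))%:C *: v).
rewrite key.
have -> : 2 * ((complex.Re (dot w (A w)) + 1) / (2 * nrm2 w)) * nrm2 w =
   complex.Re (dot w (A w)) + 1.
  by field; rewrite ne.
lra.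
Qed.
End Herm.

Lemma H_split L i i' j' j (v : vec R d L) : (i <= i')%N -> (i' <= j')%N -> (j' <= j)%N ->
  Hchain h i j v = Hchain h i i' v + Hchain h i' j' v + Hchain h j' j v.
Proof.
move=> H1 H2 H3; rewrite /Hchain (big_cat_nat H1 (leq_trans H2 H3)) /=.
by rewrite (big_cat_nat H2 H3) /= addrA.
Qed.

Lemma ker_sub L i i' j' j (v : vec R d L) : (i <= i')%N -> (i' <= j')%N -> (j' <= j)%N ->
  Hchain h i j v = 0 -> Hchain h i' j' v = 0.
Proof.
move=> H1 H2 H3 Hv.
apply: (pos_ker (@Hchain_lin R d h L i' j')); [exact: ImH | exact: ReH|].
have E := congr1 (dot v) (H_split v H1 H2 H3); rewrite Hv dot0r !dotDr in E.
have := ReH i i' v; have := ReH i' j' v; have := ReH j' j v.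
have := congr1 (@complex.Re R) E; rewrite !ReD Re0 => E'.
move=> a b c; apply: c_eq; rewrite ?ImH // Re0; lra.
Qed.
End Pos.


Section Gap.
Variables (R : realType) (d : nat) (h : two_site R d) (hp : positive_op h) (a0 : 'I_d).
Local Notation C := (R[i]).

Lemma dot_compl L i j (phi : vec R d L) :
  dot phi (phi - Gproj h L i j phi) = (nrm2 (phi - Gproj h L i j phi))%:C.
Proof.
have E : forall z, dot phi z = dot (phi - Gproj h L i j phi) z + dot (Gproj h L i j phi) z.
  by move=> z; rewrite -dotDl subrK.
by rewrite -dot_self E (G_orth _ (G_in _ _ _ _)) addr0.
Qed.

Lemma gap_prop k (phi : vec R d k) :
  gap h k * nrm2 (phi - Gproj h k 0 k.-1 phi) <= complex.Re (dot phi (Hchain h 0 k.-1 phi)).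
Proof.
set n := nrm2 _; set q := complex.Re _.
have q0 : 0 <= q by exact: ReH.
have [n0|nn0] := eqVneq n 0; first by rewrite n0 mulr0.
have np : 0 < n by rewrite lt_def nn0 nrm2_ge0.
rewrite -ler_pdivlMr //; apply: ge_sup.
  exists 0 => psi; rewrite scale0r subr0; exact: pos_H.
move=> g /(_ phi); rewrite dotBr dotZr dot_compl le0c => /andP [_].
rewrite ReB ReMc /= mul0r subr0 subr_ge0 -/n -/q => H.
by rewrite ler_pdivlMr.
Qed.

Lemma gap_embed L c k' (hck : (c + k'.+1 <= L)%N) (psi : vec R d L) :
  gap h k'.+1 * nrm2 (psi - Gproj h L c (c + k') psi) <=
  complex.Re (dot psi (Hchain h c (c + k') psi)).
Proof.
suff : gap h k'.+1 * nrm2 (psi - Gproj h L (c + 0) (c + k') psi) <=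
  complex.Re (dot psi (Hchain h (c + 0) (c + k') psi)) by rewrite addn0.
rewrite /nrm2 (dot_fib hck a0) [in leRHS](dot_fib hck a0) !Re_sum mulr_sumr.
apply: ler_sum => r Hr.
rewrite fib_H // fibB (fib_G h hck (a0:=a0)) // -/(nrm2 _).
exact: gap_prop.
Qed.

Lemma gammaN_le N k : (2 <= k <= N)%N -> gammaN h N <= gap h k.
Proof.
move=> Hk; rewrite /gammaN; apply: ge_bigmin_seq => //.
by rewrite mem_index_iota; lia.
Qed.

Lemma eps_set_bound m' n e : (exists psi : vec R d (m' + n).+1,
         [/\ kerH h (m' + n).+1 0 m' psi,
             (forall v, kerH h (m' + n).+1 0 (m' + n) v -> dot v psi = 0),
             dot psi psi = 1 &
             e%:C = dot psi (Gproj h (m' + n).+1 m' (m' + n) psi)]) -> 0 <= e <= 1.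
Proof.
move=> [psi [_ _ H1 H2]].
have n1 : nrm2 psi = 1 by rewrite /nrm2 H1.
move: H2; rewrite G_self => -[->]; rewrite nrm2_ge0 -n1; exact: G_le.
Qed.

Lemma eps_ge0 m' n : 0 <= eps h m' n.
Proof.
rewrite /eps; set E := (X in sup X).
have [[e He]|E0] := pselect (exists e, E e); last first.
  by rewrite sup_out // => -[[e' He'] _]; apply: E0; exists e'.
have := eps_set_bound He => /andP [e0 _].
apply: (le_trans e0); apply: ub_le_sup => //.
by exists 1 => e' He'; have /andP [] := eps_set_bound He'.
Qed.

Lemma eps_le1 m' n : eps h m' n <= 1.
Proof.
rewrite /eps; set E := (X in sup X).
have [[e He]|E0] := pselect (exists e, E e); last first.
  by rewrite sup_out // => -[[e' He'] _]; apply: E0; exists e'.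
by apply: ge_sup; [exists e | move=> e' He'; have /andP [] := eps_set_bound He'].
Qed.

Lemma eps_le_sup m m' n : (m <= m')%N -> eps h m' n <= eps_sup h m n.
Proof.
move=> H; apply: ub_le_sup; last by exists m'.
by exists 1 => e [m'' [_ ->]]; exact: eps_le1.
Qed.

Lemma eps_sup_ge0 m n : 0 <= eps_sup h m n.
Proof. exact: le_trans (eps_ge0 m n) (eps_le_sup _ (leqnn m)). Qed.

Lemma eps_prop m' n (u : vec R d (m' + n).+1) :
  Hchain h 0 m' u = 0 -> (forall v, Hchain h 0 (m' + n) v = 0 -> dot v u = 0) ->
  complex.Re (dot u (Gproj h _ m' (m' + n) u)) <= eps h m' n * nrm2 u.
Proof.
move=> Hu Hv.
have [n0|nn0] := eqVneq (nrm2 u) 0.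
  by rewrite n0 mulr0 (nrm2_eq0 n0) dot0l.
have np : 0 < nrm2 u by rewrite lt_def nn0 nrm2_ge0.
set a := (Num.sqrt (nrm2 u))^-1.
have a2 : a ^+ 2 * nrm2 u = 1.
  by rewrite /a exprVn sqr_sqrtr ?nrm2_ge0 // mulVf.
set psi := a%:C *: u.
have Gpsi : Gproj h _ m' (m' + n) psi = a%:C *: Gproj h _ m' (m' + n) u.
  by rewrite /psi (linZ (G_lin _ _ _)).
have Epsi : complex.Re (dot psi (Gproj h _ m' (m' + n) psi)) =
   a ^+ 2 * complex.Re (dot u (Gproj h _ m' (m' + n) u)).
  rewrite Gpsi /psi dotZl dotZr conjCr mulrA ReMc /= !mul0r !mulr0 !subr0.
  by rewrite addr0 mul0r subr0 expr2.
have : a ^+ 2 * complex.Re (dot u (Gproj h (m' + n).+1 m' (m' + n) u)) <= eps h m' n.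
  rewrite -Epsi /eps; apply: ub_le_sup.
    by exists 1 => e He; have /andP [] := eps_set_bound He.
  exists psi; split.
  - by rewrite /kerH /= /psi (linZ (Hchain_lin _ _ _)) Hu scaler0.
  - by move=> v Kv; rewrite /psi dotZr Hv // mulr0.
  - by rewrite dot_self /psi nrm2Z a2.
  - by rewrite G_self.
move=> H.
set X := complex.Re _ in H *.
have -> : X = (a ^+ 2 * X) * nrm2 u by rewrite mulrAC a2 mul1r.
by rewrite ler_pM2r.
Qed.

Lemma eps_embed L m' n (hL : ((m' + n).+1 <= L)%N) (u : vec R d L) :
  Hchain h 0 m' u = 0 -> (forall v, Hchain h 0 (m' + n) v = 0 -> dot v u = 0) ->
  complex.Re (dot u (Gproj h L m' (m' + n) u)) <= eps h m' n * nrm2 u.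
Proof.
move=> Hu Hv.
have hck : (0 + (m' + n).+1 <= L)%N by [].
rewrite (dot_fib hck a0) /nrm2 (dot_fib hck a0) !Re_sum mulr_sumr.
apply: ler_sum => r Hr.
have -> : fib 0 (m' + n) (Gproj h L m' (m' + n) u) r = Gproj h _ m' (m' + n) (fib 0 (m' + n) u r).
  by rewrite -(fib_G h hck (a0:=a0)) //; lia.
apply: eps_prop.
  by rewrite -(fib_H h hck) ?Hu ?fib0 //; lia.
move=> v' Kv'; rewrite -(dot_lift hck (a0:=a0)) //; apply: Hv.
apply: (ker_fib hck (a0:=a0)) => //.
move=> r' Hr'; rewrite fib_lift //; case: eqP => _ //.
exact: (lin0 (Hchain_lin _ _ _)).
Qed.
End Gap.


Section RL.
Variable R : realType.

Lemma quad_form (A B Cc a b : R) : 0 <= A -> 0 <= B -> Cc ^+ 2 <= A * B ->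
  0 <= A * b ^+ 2 + B * a ^+ 2 - 2 * Cc * a * b.
Proof.
move=> A0 B0 H.
have [A0'|Ap] := eqVneq A 0.
  have C0 : Cc = 0 by move: H; rewrite A0' mul0r => H; apply/eqP; rewrite -sqrf_eq0 eq_le H sqr_ge0.
  rewrite A0' C0.
  have -> : 0 * b ^+ 2 + B * a ^+ 2 - 2 * 0 * a * b = B * a ^+ 2 by ring.
  by apply: mulr_ge0 => //; exact: sqr_ge0.
have Ap' : 0 < A by rewrite lt_def Ap A0.
rewrite -(pmulr_rge0 _ Ap').
have -> : A * (A * b ^+ 2 + B * a ^+ 2 - 2 * Cc * a * b) = (A * b - Cc * a) ^+ 2 + (A * B - Cc ^+ 2) * a ^+ 2 by ring.
by apply: addr_ge0; [exact: sqr_ge0 | apply: mulr_ge0; [lra | exact: sqr_ge0]].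
Qed.

Lemma le_of_sq (x m : R) : 0 <= m -> x ^+ 2 <= m ^+ 2 -> x <= m.
Proof. move=> m0 H; case: (lerP x m) => // xm; have : m ^+ 2 < x ^+ 2 by nra. by rewrite ltNge H. Qed.

Lemma real_key (e X x y p A B : R) :
  0 <= e -> e <= 2^-1 -> 0 <= A -> 0 <= B -> 0 <= p -> p <= X ->
  X = x + y -> x ^+ 2 <= X * (e * B) -> x ^+ 2 <= p * B -> y ^+ 2 <= (X - p) * A ->
  X <= (Num.sqrt (1 - e) + Num.sqrt e) * (Num.sqrt e * B + Num.sqrt (1 - e) * A).
Proof.
move=> e0 e1 A0 B0 p0 pX EX Hx1 Hx2 Hy.
set s := Num.sqrt (1 - e); set t := Num.sqrt e.
have s0 : 0 <= s by exact: sqrtr_ge0.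
have t0 : 0 <= t by exact: sqrtr_ge0.
have s2 : s ^+ 2 = 1 - e by rewrite sqr_sqrtr; lra.
have t2 : t ^+ 2 = e by rewrite sqr_sqrtr.
have ts : t <= s.
  apply: le_of_sq => //; rewrite s2 t2; lra.
set a := Num.sqrt A; set b := Num.sqrt B.
have a0 : 0 <= a by exact: sqrtr_ge0.
have b0 : 0 <= b by exact: sqrtr_ge0.
have a2 : a ^+ 2 = A by rewrite sqr_sqrtr.
have b2 : b ^+ 2 = B by rewrite sqr_sqrtr.
have X0 : 0 <= X by lra.
set rho := Num.sqrt X.
have r0 : 0 <= rho by exact: sqrtr_ge0.
have r2 : rho ^+ 2 = X by rewrite sqr_sqrtr.
set P := Num.sqrt p; set Y := Num.sqrt (X - p).
have P0 : 0 <= P by exact: sqrtr_ge0.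
have Y0 : 0 <= Y by exact: sqrtr_ge0.
have P2 : P ^+ 2 = p by rewrite sqr_sqrtr.
have Y2 : Y ^+ 2 = X - p by rewrite sqr_sqrtr; lra.
have K0 : 0 <= (s + t) * (t * B + s * A).
  by apply: mulr_ge0; [lra | apply: addr_ge0; apply: mulr_ge0].
have hy : y <= Y * a.
  apply: le_of_sq; first exact: mulr_ge0.
  by rewrite exprMn Y2 a2.
have [case1|case2] := lerP p (e * X).
  have hx : x <= P * b.
    apply: le_of_sq; first exact: mulr_ge0.
    by rewrite exprMn P2 b2.
  set M := P * b + Y * a.
  have XM : X <= M by rewrite /M; lra.
  have st0 : 0 <= s * t by exact: mulr_ge0.
  have st2 : (s * t) ^+ 2 = e * (1 - e) by rewrite exprMn s2 t2 mulrC.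
  set c1 := (s * t + e) * X - p.
  set c2 := (1 - e + s * t) * X - (X - p).
  have c1p : 0 <= c1 by rewrite /c1; nra.
  have c2p : 0 <= c2.
    have : 0 <= t * (s - t) by apply: mulr_ge0; lra.
    rewrite /c2 mulrBr -expr2 t2 => H; nra.
  have c12 : (P * Y) ^+ 2 <= c1 * c2.
    rewrite exprMn P2 Y2 -subr_ge0.
    have -> : c1 * c2 - p * (X - p) = (1 - 2 * e) * X * (e * X - p) + ((s*t)^+2 - e * (1 - e)) * X ^+ 2.
      by rewrite /c1 /c2; ring.
    rewrite st2 subrr mul0r addr0; apply: mulr_ge0; [apply: mulr_ge0|]; lra.
  have Q := @quad_form c1 c2 (P * Y) a b c1p c2p c12.
  have MK : M ^+ 2 <= X * ((s + t) * (t * B + s * A)).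
    rewrite -subr_ge0.
    have -> : X * ((s + t) * (t * B + s * A)) - M ^+ 2 = c1 * b ^+ 2 + c2 * a ^+ 2 - 2 * (P * Y) * a * b.
      have EX2 : X = P ^+ 2 + Y ^+ 2 by rewrite P2 Y2; ring.
      rewrite /M /c1 /c2 -b2 -a2 -s2 -t2 -P2 EX2; ring.
    exact: Q.
  have [X00|Xp] := eqVneq X 0; first by rewrite X00.
  have Xp' : 0 < X by rewrite lt_def Xp X0.
  rewrite -(ler_pM2l Xp'); apply: le_trans MK.
  nra.
have hx : x <= rho * t * b.
  apply: le_of_sq; first by apply: mulr_ge0 => //; exact: mulr_ge0.
  by rewrite !exprMn r2 t2 b2 -mulrA.
have hY : Y <= s * rho.
  apply: le_of_sq; first exact: mulr_ge0.
  rewrite exprMn Y2 s2 r2; nra.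
have hy' : y <= s * rho * a by apply: (le_trans hy); apply: ler_wpM2r.
have XK : X <= (t * b + s * a) ^+ 2.
  have [r00|rp] := eqVneq rho 0.
    by rewrite -r2 r00 expr0n /=; exact: sqr_ge0.
  have rp' : 0 < rho by rewrite lt_def rp r0.
  have : rho <= t * b + s * a.
    rewrite -(ler_pM2l rp'); rewrite -expr2 r2; nra.
  move=> H; rewrite -r2; nra.
apply: (le_trans XK); rewrite -subr_ge0.
have -> : (s + t) * (t * B + s * A) - (t * b + s * a) ^+ 2 = s * t * (b - a) ^+ 2.
  by rewrite -a2 -b2; ring.
by apply: mulr_ge0; [exact: mulr_ge0 | exact: sqr_ge0].
Qed.
End RL.


Section Comm.
Variables (R : realType) (d : nat) (h : two_site R d) (a0 : 'I_d).
Variables (L c k' : nat) (hck : (c + k'.+1 <= L)%N).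
Local Notation C := (R[i]).
Local Notation k := k'.+1.

Lemma reset_upd r (jx jx1 : 'I_L) a b : ~~ inw c k' jx -> ~~ inw c k' jx1 ->
  wreset c k' a0 r == r -> wreset c k' a0 (upd r jx jx1 a b) == upd r jx jx1 a b.
Proof.
move=> n1 n2 /eqP Hr; apply/eqP/ffunP => i; rewrite !ffunE.
case: (boolP (inw c k' i)) => Hi //.
have -> : (i == jx) = false by apply/negP => /eqP E; move: n1; rewrite -E Hi.
have -> : (i == jx1) = false by apply/negP => /eqP E; move: n2; rewrite -E Hi.
by rewrite -Hr ffunE Hi.
Qed.

Lemma upd_glue_out (s : conf d k) (r : conf d L) (jx jx1 : 'I_L) a b : ~~ inw c k' jx -> ~~ inw c k' jx1 ->
  upd (wglue c (k':=k') s r) jx jx1 a b = wglue c (k':=k') s (upd r jx jx1 a b).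
Proof.
move=> n1 n2; apply/ffunP => i; rewrite !ffunE.
case: (boolP (inw c k' i)) => Hi //.
have -> : (i == jx) = false by apply/negP => /eqP E; move: n1; rewrite -E Hi.
by have -> : (i == jx1) = false by apply/negP => /eqP E; move: n2; rewrite -E Hi.
Qed.

Lemma fib_hop_out x (v : vec R d L) r (jx jx1 : 'I_L) :
  (jx : nat) = x -> (jx1 : nat) = x.+1 -> (x.+1 < c)%N ->
  fib c k' (hop h x v) r =
  \sum_(a < d) \sum_(b < d) h (r jx, r jx1) (a, b) *: fib c k' v (upd r jx jx1 a b).
Proof.
move=> e1 e2 hx.
have n1 : ~~ inw c k' jx by rewrite /inw e1; lia.
have n2 : ~~ inw c k' jx1 by rewrite /inw e2; lia.
apply/ffunP => s; rewrite !ffunE sum_ffunE.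
have l1 : (x < L)%N by lia.
have l2 : (x.+1 < L)%N by lia.
rewrite (big_ord_eq l1) (big_ord_eq l2).
have E1 : Ordinal l1 = jx by apply: ord_inj.
have E2 : Ordinal l2 = jx1 by apply: ord_inj.
rewrite E1 E2 !ffunE (negbTE n1) (negbTE n2).
apply: eq_bigr => a _; rewrite sum_ffunE; apply: eq_bigr => b _.
by rewrite !ffunE upd_glue_out.
Qed.

Lemma G_comm i j (y : vec R d L) : (j < c)%N -> Hchain h i j y = 0 ->
  Hchain h i j (Gproj h L (c + 0) (c + k') y) = 0.
Proof.
move=> hj Hy; apply: (fib_eq hck (a0:=a0)) => r Hr; rewrite fib0.
have key : forall x, (x < j)%N -> fib c k' (hop h x (Gproj h L (c + 0) (c + k') y)) r =
    Gproj h k 0 k' (fib c k' (hop h x y) r).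
  move=> x hx.
  have l1 : (x < L)%N by lia.
  have l2 : (x.+1 < L)%N by lia.
  have hx1 : (x.+1 < c)%N by lia.
  rewrite !(@fib_hop_out x _ r (Ordinal l1) (Ordinal l2) erefl erefl hx1).
  rewrite (lin_sum (G_lin _ _ _)); apply: eq_bigr => a _.
  rewrite (lin_sum (G_lin _ _ _)); apply: eq_bigr => b _.
  rewrite (linZ (G_lin _ _ _)) (fib_G h hck (a0:=a0)) //.
  by apply: reset_upd => //; rewrite /inw /=; lia.
have : fib c k' (Hchain h i j y) r = 0 by rewrite Hy fib0.
rewrite /Hchain !fib_sum => H0.
have -> : \sum_(i <= x < j) fib c k' (hop h x (Gproj h L (c + 0) (c + k') y)) r =
   Gproj h k 0 k' (\sum_(i <= x < j) fib c k' (hop h x y) r).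
  rewrite (lin_sum (G_lin _ _ _)) big_nat_cond [in RHS]big_nat_cond.
  by apply: eq_bigr => x /andP [/andP [_ hx] _]; rewrite key.
by rewrite H0 (lin0 (G_lin _ _ _)).
Qed.
End Comm.


Section Main.
Variables (R : realType) (d : nat) (h : two_site R d) (hp : positive_op h) (a0 : 'I_d).
Variables (m n : nat) (hm : (1 <= m)%N) (hmn : (m <= n)%N).
Hypothesis heps : eps_sup h m n < 2^-1.
Variable L : nat.
Local Notation V := (vec R d L).
Local Notation eps := (eps_sup h m n).
Local Notation al := (alpha eps).
Local Notation be := (beta eps).
Local Notation G j := (Gproj h L 0 j).

Lemma eps0 : 0 <= eps. Proof. exact: eps_sup_ge0. Qed.
Lemma eps1 : eps <= 2^-1. Proof. exact: ltW. Qed.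

Lemma final_arith (A B X : R) :
  X <= (Num.sqrt (1 - eps) + Num.sqrt eps) * (Num.sqrt eps * B + Num.sqrt (1 - eps) * A) ->
  be * B <= (be - al) * A + (A + B - X).
Proof.
have e0 := eps0; have e1 := eps1.
rewrite /alpha /beta; set s := Num.sqrt (1 - eps); set t := Num.sqrt eps => H.
have s2 : s ^+ 2 = 1 - eps by rewrite sqr_sqrtr; lra.
have t2 : t ^+ 2 = eps by rewrite sqr_sqrtr.
rewrite -subr_ge0.
have -> : (s * (s - t) - (s - t) ^+ 2) * A + (A + B - X) - s * (s - t) * B =
   (s + t) * (t * B + s * A) - X + (1 - s ^+ 2 - t ^+ 2) * (A + B).
  by ring.
rewrite s2 t2; lra.
Qed.

Lemma ab_bounds : [/\ 0 <= al, al <= 1, 0 <= be & be <= 1].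
Proof.
have e0 := eps0; have e1 := eps1.
rewrite /alpha /beta; set s := Num.sqrt (1 - eps); set t := Num.sqrt eps.
have s2 : s ^+ 2 = 1 - eps by rewrite sqr_sqrtr; lra.
have t2 : t ^+ 2 = eps by rewrite sqr_sqrtr.
have s0 : 0 <= s by exact: sqrtr_ge0.
have t0 : 0 <= t by exact: sqrtr_ge0.
have ts : t <= s by apply: le_of_sq => //; rewrite s2 t2; lra.
split; [exact: sqr_ge0 | nra | nra | nra].
Qed.

Lemma sub3 (x y z : V) : (x - y) - (z - y) = x - z.
Proof. by rewrite opprB addrA subrK. Qed.

Lemma hsum (a b c : V) : (a - b) + (c - a) + b = c.
Proof. by rewrite addrAC subrK addrC subrK. Qed.
Lemma hsub (a b c a' b' : V) : (a + b + c) - (a' + b' + c) = (a - a') + (b - b').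
Proof. by rewrite opprD addrACA subrr addr0 opprD addrACA. Qed.

Lemma lin_dec (Qf : V -> V) (hQ : lin Qf) a b c : Qf c = c ->
  (a + b + c) - Qf (a + b + c) = (a - Qf a) + (b - Qf b).
Proof. by move=> Hc; rewrite !(linD hQ) Hc hsub. Qed.

Lemma ker_mono j j' (v : V) : (j' <= j)%N -> Hchain h 0 j v = 0 -> Hchain h 0 j' v = 0.
Proof. move=> H; exact: (ker_sub hp a0 (leq0n _) (leq0n _) H). Qed.

Lemma pyth_nest j j' (x : V) : (j' <= j)%N ->
  nrm2 (x - G j x) = nrm2 (x - G j' x) + nrm2 (G j' x - G j x).
Proof.
move=> H.
have Pz : G j' (x - G j x) = G j' x - G j x.
  rewrite (linB (G_lin _ _ _)) G_nest21 // => v; exact: ker_mono.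
by rewrite (G_pyth h 0 j' (x - G j x)) Pz sub3 addrC.
Qed.

Lemma vec_ineq (j1 j2 j3 : nat) (psi : V) : (j1 < j2)%N -> (j2 + n = j3)%N -> (j3 < L)%N ->
  (m <= j2)%N ->
  be * nrm2 (G j2 psi - G j3 psi) <=
  (be - al) * nrm2 (G j1 psi - G j2 psi) + nrm2 (psi - Gproj h L j2 j3 psi).
Proof.
move=> h12 h23 h3L hmj.
set Q := Gproj h L j2 j3.
set Rp := G j1 psi; set Pp := G j2 psi; set PMp := G j3 psi.
set u := Pp - PMp; set v := Rp - Pp; set phi := Rp - PMp; set w := psi - Rp.
have k32 : forall y : V, Hchain h 0 j3 y = 0 -> Hchain h 0 j2 y = 0.
  by move=> y; apply: ker_mono; lia.
have k21 : forall y : V, Hchain h 0 j2 y = 0 -> Hchain h 0 j1 y = 0.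
  by move=> y; apply: ker_mono; lia.
have k3Q : forall y : V, Hchain h 0 j3 y = 0 -> Hchain h j2 j3 y = 0.
  by move=> y; apply: (ker_sub hp a0 (leq0n _)); lia.
have hck : (j2 + n.+1 <= L)%N by lia.
have comm : forall y : V, Hchain h 0 j1 y = 0 -> Hchain h 0 j1 (Q y) = 0.
  move=> y Hy; have := G_comm a0 hck h12 Hy; by rewrite addn0 h23.
have phiE : phi = u + v by rewrite /phi /u /v [RHS]addrC addrA subrK.
have Hu : Hchain h 0 j2 u = 0.
  by rewrite /u (linB (Hchain_lin _ _ _)) G_in (k32 _ (G_in _ _ _ _)) subrr.
have vE : v = Rp - G j2 Rp by rewrite /v /Rp G_nest12 // => y; exact: k21.
have Hphi1 : Hchain h 0 j1 phi = 0.
  by rewrite /phi (linB (Hchain_lin _ _ _)) G_in (k21 _ (k32 _ (G_in _ _ _ _))) subrr.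
have QPM : Q PMp = PMp by apply: G_id; apply: k3Q; exact: G_in.
set z1 := phi - Q phi; set z2 := w - Q w.
have E1 : psi - Q psi = z1 + z2.
  have -> : psi = phi + w + PMp by rewrite /phi /w hsum.
  by rewrite /z1 /z2 (lin_dec (G_lin h j2 j3) phi w QPM).
have Hz1 : Hchain h 0 j1 z1 = 0.
  by rewrite /z1 (linB (Hchain_lin _ _ _)) Hphi1 comm // subrr.
have d12 : dot z1 z2 = 0.
  rewrite /z2 dotBr /w (G_orth _ Hz1) -G_sa.
  by rewrite (G_orth _ (comm _ Hz1)) subrr.
have S1 : nrm2 z1 <= nrm2 (psi - Q psi).
  by rewrite E1 nrm2D /rdot d12 Re0 mulr0 addr0 lerDl nrm2_ge0.
set X := nrm2 (Q phi).
set A := nrm2 v; set B := nrm2 u.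
have duv : dot u v = 0 by rewrite vE; exact: G_orth.
have S2 : nrm2 z1 = A + B - X.
  have E2 := G_pyth h j2 j3 phi.
  have E3 : nrm2 phi = A + B by rewrite phiE nrm2D /rdot duv Re0 mulr0 addr0 addrC.
  rewrite -/Q -/X -/z1 E3 in E2; rewrite E2; ring.
set x := rdot (Q phi) u; set y := rdot (Q phi) v.
set p := nrm2 (G j2 (Q phi)).
have HQ : Hchain h j2 j3 (Q phi) = 0 by exact: G_in.
have EX : X = x + y.
  rewrite /X /x /y /rdot -ReD -dotDr -phiE /nrm2.
  by rewrite -(G_dotl phi HQ).
have X0 : 0 <= X by exact: nrm2_ge0.
have Hx1 : x ^+ 2 <= X * (eps * B).
  have := CS (Q phi) (Q u); rewrite /rdot (G_dotl u HQ) -/(rdot _ _) -/x => H.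
  apply: (le_trans H); apply: ler_wpM2l => //.
  have e1 : nrm2 (Q u) <= Defs.eps h j2 n * B.
    have hL : ((j2 + n).+1 <= L)%N by lia.
    have := eps_embed a0 hL Hu; rewrite h23 -/Q G_self ReC; apply.
    move=> v' Hv'; rewrite /u dotBr (G_dotl _ (k32 _ Hv')) (G_dotl _ Hv') subrr //.
  apply: (le_trans e1); apply: ler_wpM2r; first exact: nrm2_ge0.
  exact: eps_le_sup.
have Hx2 : x ^+ 2 <= p * B.
  have := CS (G j2 (Q phi)) u; by rewrite /rdot (G_dotr _ Hu) -/(rdot _ _).
have Hy : y ^+ 2 <= (X - p) * A.
  have E := G_pyth h 0 j2 (Q phi); rewrite -/X -/p in E.
  have -> : X - p = nrm2 (Q phi - G j2 (Q phi)) by rewrite E; ring.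
  have := CS (Q phi - G j2 (Q phi)) v.
  rewrite /rdot dotBl vE (G_orth _ (G_in _ _ _ _)) subr0 -vE.
  by move=> H; exact: H.
have p0 : 0 <= p by exact: nrm2_ge0.
have pX : p <= X by exact: G_le.
have K := @real_key R eps X x y p A B eps0 eps1 (nrm2_ge0 _) (nrm2_ge0 _) p0 pX EX Hx1 Hx2 Hy.
apply: (le_trans (final_arith K)); rewrite -S2; exact: lerD (lexx _) S1.
Qed.

Lemma claim (gpos : 0 <= gammaN h (m + n)) M : (2 <= M)%N -> (M <= L)%N -> forall psi : V,
  gammaN h (m + n) * (al * nrm2 (psi - G (M - n).-1 psi) + be * nrm2 (G (M - n).-1 psi - G M.-1 psi))
  <= complex.Re (dot psi (Hchain h 0 M.-1 psi)).
Proof.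
elim/ltn_ind: M => M IH H2 HL psi.
have [al0 al1 be0 be1] := ab_bounds.
set gam := gammaN h (m + n).
have [base|step] := leqP M (m + n).
  have hck : (0 + (M.-1).+1 <= L)%N by rewrite add0n prednK //; lia.
  have G1 := gap_embed hp a0 hck psi.
  rewrite add0n prednK in G1; last lia.
  have gl : gam <= gap h M by apply: gammaN_le; lia.
  have py : nrm2 (psi - G M.-1 psi) = nrm2 (psi - G (M - n).-1 psi) + nrm2 (G (M - n).-1 psi - G M.-1 psi).
    by apply: pyth_nest; lia.
  set A := nrm2 (psi - G (M - n).-1 psi) in py *.
  set B := nrm2 (G (M - n).-1 psi - G M.-1 psi) in py *.
  have A0 : 0 <= A by exact: nrm2_ge0.
  have B0 : 0 <= B by exact: nrm2_ge0.
  have N0 := nrm2_ge0 (psi - G M.-1 psi).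
  apply: le_trans G1.
  have h1 : gam * (al * A + be * B) <= gam * (A + B) by apply: ler_wpM2l => //; nra.
  apply: (le_trans h1); rewrite -py; exact: ler_wpM2r.
set M' := (M - n)%N.
have hM' : (M' < M)%N by rewrite /M'; lia.
have IH' := IH M' hM' (_ : (2 <= M')%N) (_ : (M' <= L)%N) psi.
rewrite /M' in IH'; have {IH'} IH' := IH' (ltac:(lia)) (ltac:(lia)).
have Hs : Hchain h 0 M.-1 psi = Hchain h 0 M'.-1 psi + Hchain h M'.-1 M.-1 psi.
  have l : (M'.-1 <= M.-1)%N by rewrite /M'; lia.
  by rewrite /Hchain (big_cat_nat (leq0n M'.-1) l) /=.
rewrite Hs dotDr ReD.
have hck : (M'.-1 + n.+1 <= L)%N by rewrite /M'; lia.
have G2 := gap_embed hp a0 hck psi.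
have E : (M'.-1 + n)%N = M.-1 by rewrite /M'; lia.
rewrite E in G2.
have gl : gam <= gap h n.+1 by apply: gammaN_le; lia.
have h12 : ((M' - n).-1 < M'.-1)%N by rewrite /M'; lia.
have h3L : (M.-1 < L)%N by lia.
have hmj : (m <= M'.-1)%N by rewrite /M'; lia.
have VI := vec_ineq psi h12 E h3L hmj.
have py : nrm2 (psi - G M'.-1 psi) = nrm2 (psi - G (M' - n).-1 psi) + nrm2 (G (M' - n).-1 psi - G M'.-1 psi).
  by apply: pyth_nest; lia.
rewrite -/M' in IH'.
set W := nrm2 (psi - G (M' - n).-1 psi) in py IH' *.
set A := nrm2 (G (M' - n).-1 psi - G M'.-1 psi) in py IH' VI *.
set B := nrm2 (G M'.-1 psi - G M.-1 psi) in VI *.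
set Z := nrm2 (psi - Gproj h L M'.-1 M.-1 psi) in VI G2 *.
rewrite py.
have Z0 : 0 <= Z by exact: nrm2_ge0.
have t2 : gam * (be * B) <= gam * ((be - al) * A) + gam * Z.
  by rewrite -mulrDr; apply: ler_wpM2l.
have t4 : gam * Z <= gap h n.+1 * Z by apply: ler_wpM2r.
have eq : gam * (al * (W + A) + be * B) = gam * (al * W + be * A) + gam * (be * B) - gam * ((be - al) * A).
  by ring.
rewrite -/gam in IH'; rewrite eq; lra.
Qed.
End Main.


Unset Implicit Arguments.

Theorem theorem2p1 (R : realType) (d : nat) (h : two_site R d)
  (m n N : nat) (psi : vec R d N) :
  (2 <= d)%N ->
  positive_op h ->
  frustration_free h ->
  (1 <= m)%N -> (m <= n)%N ->
  eps_sup h m n < 2^-1 ->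
  (2 <= N)%N ->
  (forall v, kerH h N 0 N.-1 v -> dot v psi = 0) ->
  let psi2 := Gproj h N 0 (N - n).-1 psi in
  let psi1 := psi - psi2 in
  ((gammaN h (m + n) *
     (alpha (eps_sup h m n) * nrm2 psi1 + beta (eps_sup h m n) * nrm2 psi2))%:C
   <= dot psi (Hchain h 0 N.-1 psi)).
Proof.
move=> hd hp _ hm hmn heps hN horth; cbv zeta.
have a0 : 'I_d by exists 0%N; lia.
have PN : Gproj h N 0 N.-1 psi = 0 by apply: G_zero => v Hv; apply: horth.
rewrite lecE (ImH hp a0) eqxx /=.
have [g|g] := lerP 0 (gammaN h (m + n)).
  have := claim hp a0 hm hmn heps g hN (leqnn N) psi.
  by rewrite PN subr0.
have [al0 al1 be0 be1] := ab_bounds heps.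
have := ReH hp a0 0 N.-1 psi.
have : 0 <= alpha (eps_sup h m n) * nrm2 (psi - Gproj h N 0 (N - n).-1 psi) + beta (eps_sup h m n) * nrm2 (Gproj h N 0 (N - n).-1 psi).
  by apply: addr_ge0; apply: mulr_ge0 => //; exact: nrm2_ge0.
nra.
Qed.
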